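(* For all integers $q\ge1$ and $t\ge0$, $\mathsf{DEL}_{\mathrm{cor}}(q,2t)\le \mathsf{INDEL}_{\mathrm{cor}}(q,t)\le \mathsf{DEL}_{\mathrm{cor}}(q,t).$
   Context: Let $[q]=\{0,1,\dots,q-1\}$. For $1\le m\le q$, a partial permutation of length $m$ over $[q]$ is a sequence $\pi=(\pi_1,\dots,\pi_m)$ of $m$ pairwise distinct elements of $[q]$. Let $\mathcal{S}_m^q$ be the set of those of length $m$ and $\mathcal{S}_{\mathrm{all}}^q=\bigcup_{m=1}^{q}\mathcal{S}_m^q$. A code is any subset of $\mathcal{S}_{\mathrm{all}}^q$. For $\pi$ of length $m$ and integer $j\ge 0$, $\pi_{\downarrow j}=(\pi_{k+1},\dots,\pi_m)$ with $k=\min(j,m-1)$; $\mathcal{B}_{\mathrm{del}}^t(\pi)=\{\pi_{\downarrow j}:0\le j\le t\}$. $\mathcal{B}_{\mathrm{indel}}^t(\pi)$ is the set of all partial permutations obtainable from $\pi$ by at most $t$ operations, each either a single tail deletion (removing the first symbol of a partial permutation of length at least $2$) or a single tail insertion (prepending an element of $[q]$ not already occurring). For $X\in\{\mathrm{del},\mathrm{indel}\}$, a code $\mathcal{C}$ is $t$-tail-$X$-correcting if $\mathcal{B}_X^t(\pi_1)\cap\mathcal{B}_X^t(\pi_2)=\emptyset$ for all distinct $\pi_1,\pi_2\in\mathcal{C}$. $\mathsf{DEL}_{\mathrm{cor}}(q,t)$ and $\mathsf{INDEL}_{\mathrm{cor}}(q,t)$ denote the maximum sizes of $t$-tail-deletion-correcting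 and $t$-tail-indel-correcting codes in $\mathcal{S}_{\mathrm{all}}^q$. *)

(* Defs.v *)
From mathcomp Require Import all_boot.
Set Implicit Arguments. Unset Strict Implicit. Unset Printing Implicit Defensive.

(* A partial permutation over [q] = {0,..,q-1} is a nonempty duplicate-free
   sequence of naturals < q (its length is then automatically <= q). *)
Definition is_pperm (q : nat) (s : seq nat) : bool :=
  [&& 0 < size s, uniq s & all (fun x => x < q) s].

Fixpoint words (q m : nat) : seq (seq nat) :=
  if m is m'.+1 then [seq a :: w | a <- iota 0 q, w <- words q m'] else [:: [::]].

Definition univ (q : nat) : seq (seq nat) :=
  [seq s <- flatten [seq words q m | m <- iota 1 q] | uniq s].

Definition tail_del (j : nat) (s : seq nat) : seq nat := drop (minn j (size s).-1) s.

Definition del_ball (t : nat) (s : seq nat) : seq (seq nat) :=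
  [seq tail_del j s | j <- iota 0 t.+1].

Definition indel_step (q : nat) (s : seq nat) : seq (seq nat) :=
  (if 1 < size s then [:: behead s] else [::]) ++
  [seq a :: s | a <- iota 0 q & a \notin s].

Fixpoint indel_ball (q t : nat) (s : seq nat) : seq (seq nat) :=
  if t is t'.+1 then
    let b := indel_ball q t' s in b ++ flatten [seq indel_step q x | x <- b]
  else [:: s].

Definition correcting (q : nat) (ball : seq nat -> seq (seq nat))
    (C : {set seq_sub (univ q)}) : bool :=
  [forall p1 in C, forall p2 in C,
     (p1 != p2) ==> ~~ has (fun x => x \in ball (ssval p2)) (ball (ssval p1))].

Definition DEL_cor (q t : nat) : nat :=
  \max_(C : {set seq_sub (univ q)} | correcting (del_ball t) C) #|C|.

Definition INDEL_cor (q t : nat) : nat :=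
  \max_(C : {set seq_sub (univ q)} | correcting (indel_ball q t) C) #|C|.

(* Main.v *)
Require Import Defs.
From mathcomp Require Import all_boot.
From mathcomp Require Import zify.
Set Implicit Arguments. Unset Strict Implicit.

Lemma words_size q m s : s \in words q m -> size s = m.
Proof.
elim: m s => [|m IH] s /=; first by rewrite inE => /eqP ->.
by case/allpairsP => [[a w] [_ /= Hw ->]] /=; rewrite (IH _ Hw).
Qed.

Lemma univ_size q s : s \in univ q -> 0 < size s.
Proof.
rewrite mem_filter => /andP [_ /flattenP [w /mapP [m mi ->] sw]].
rewrite (words_size sw); move: mi; rewrite mem_iota; lia.
Qed.

Lemma indel_shape q t s y : 0 < size s -> y \in indel_ball q t s ->
  exists w k, [/\ y = w ++ drop k s, k < size s & size w + k <= t].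
Proof.
move=> s0; elim: t y => [|t IH] y /=.
  by rewrite inE => /eqP ->; exists [::], 0; rewrite drop0.
rewrite mem_cat => /orP [H | /flattenP [z /mapP [x xb ->] yz]].
  have [w [k [-> H1 H2]]] := IH _ H; exists w, k; split => //; lia.
have [w [k [xe H1 H2]]] := IH _ xb.
move: yz; rewrite mem_cat => /orP [].
  case: ifP => // sx; rewrite inE => /eqP ->.
  case: w xe H2 => [|a w] xe H2.
    exists [::], k.+1; rewrite xe /= -drop1 drop_drop; split => //.
    move: sx; rewrite xe /= size_drop; lia.
  exists w, k; rewrite xe /=; split => //=; move: H2 => /=; lia.
case/mapP => a _ ->; exists (a :: w), k; rewrite xe; split => //=; lia.
Qed.

Lemma tail_del_drop j s : j < size s -> tail_del j s = drop j s.
Proof. by move=> H; rewrite /tail_del; congr drop; lia. Qed.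

Lemma in_del_ball t j s : j <= t -> j < size s -> drop j s \in del_ball t s.
Proof.
move=> jt js; rewrite -tail_del_drop //; apply/mapP; exists j => //; rewrite mem_iota; lia.
Qed.

Lemma meet_aux t p1 p2 w1 w2 k1 k2 :
  w1 ++ drop k1 p1 = w2 ++ drop k2 p2 -> k1 < size p1 -> k2 < size p2 ->
  size w1 + k1 <= t -> size w2 + k2 <= t -> size w2 <= size w1 ->
  exists z, z \in del_ball (2 * t) p1 /\ z \in del_ball (2 * t) p2.
Proof.
move=> E h1 h2 h3 h4 h5.
have E2 : drop k1 p1 = drop (size w1 - size w2 + k2) p2.
  have := congr1 (drop (size w1)) E.
  rewrite drop_size_cat // drop_cat; case: ltnP => [|_]; first lia.
  by rewrite drop_drop.
exists (drop k1 p1); split; first by apply: in_del_ball => //; lia.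
rewrite E2; apply: in_del_ball; first lia.
have : 0 < size (drop k1 p1) by rewrite size_drop; lia.
rewrite E2 size_drop; lia.
Qed.

Lemma indel_to_del q t s1 s2 : 0 < size s1 -> 0 < size s2 ->
  has (fun x => x \in indel_ball q t s2) (indel_ball q t s1) ->
  has (fun x => x \in del_ball (2 * t) s2) (del_ball (2 * t) s1).
Proof.
move=> n1 n2 /hasP [x x1 x2].
have [w1 [k1 [e1 a1 b1]]] := indel_shape n1 x1.
have [w2 [k2 [e2 a2 b2]]] := indel_shape n2 x2.
have E : w1 ++ drop k1 s1 = w2 ++ drop k2 s2 by rewrite -e1 -e2.
case: (leqP (size w2) (size w1)) => h.
  by have [z [z1 z2]] := meet_aux E a1 a2 b1 b2 h; apply/hasP; exists z.
have [z [z1 z2]] := meet_aux (esym E) a2 a1 b2 b1 (ltnW h).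
by apply/hasP; exists z.
Qed.

Lemma in_indel_ball_mono q t s y : y \in indel_ball q t s -> y \in indel_ball q t.+1 s.
Proof. by move=> H /=; rewrite mem_cat H. Qed.

Lemma tail_del_in q j s : tail_del j s \in indel_ball q j s.
Proof.
elim: j => [|j IH] /=; first by rewrite /tail_del min0n drop0 inE.
rewrite mem_cat; case: (leqP j.+1 (size s).-1) => h.
  apply/orP; right; apply/flattenP; exists (indel_step q (tail_del j s)).
    exact: map_f.
  rewrite /indel_step mem_cat; apply/orP; left.
  rewrite /tail_del size_drop.
  have -> : minn j (size s).-1 = j by lia.
  have -> : minn j.+1 (size s).-1 = j.+1 by lia.
  case: ifP => [_|]; last lia.
  by rewrite inE -drop1 drop_drop.
suff -> : tail_del j.+1 s = tail_del j s by rewrite IH.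
by rewrite /tail_del; congr drop; lia.
Qed.

Lemma del_sub_indel q t s y : y \in del_ball t s -> y \in indel_ball q t s.
Proof.
case/mapP => j; rewrite mem_iota => /andP [_ jt] ->.
have : j <= t by lia.
elim: t {jt} => [|t IH] jt.
  have -> : j = 0 by lia. exact: tail_del_in.
case: (leqP j t) => h; first by apply: in_indel_ball_mono; apply: IH.
have -> : j = t.+1 by lia.
exact: tail_del_in.
Qed.

Lemma corr_mono q (b1 b2 : seq nat -> seq (seq nat)) C :
  (forall s1 s2, s1 \in univ q -> s2 \in univ q ->
     has (fun x => x \in b1 s2) (b1 s1) -> has (fun x => x \in b2 s2) (b2 s1)) ->
  @correcting q b2 C -> @correcting q b1 C.
Proof.
move=> H /forallP C2; apply/forallP => p1; apply/implyP => p1C.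
apply/forallP => p2; apply/implyP => p2C; apply/implyP => ne; apply/negP => Hh.
have := C2 p1; rewrite p1C /= => /forallP /(_ p2); rewrite p2C ne /=.
by rewrite (H _ _ (ssvalP p1) (ssvalP p2) Hh).
Qed.

Lemma max_mono q (P Q : pred {set seq_sub (univ q)}) :
  (forall C, P C -> Q C) ->
  \max_(C | P C) #|C| <= \max_(C | Q C) #|C|.
Proof.
move=> H; apply/bigmax_leqP => C PC; apply: leq_bigmax_cond; exact: H.
Qed.

Theorem mainTheorem7 (q t : nat) :
  1 <= q -> DEL_cor q (2 * t) <= INDEL_cor q t <= DEL_cor q t.
Proof.
move=> _; apply/andP; split; apply: max_mono => C; apply: corr_mono.
  move=> s1 s2 u1 u2; apply: indel_to_del; [exact: (univ_size u1)|exact: (univ_size u2)].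
move=> s1 s2 _ _ /hasP [x x1 x2]; apply/hasP; exists x; exact: del_sub_indel.
Qed.
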